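(* Consider any $(M,N)$-VLFT code for a $K$-user DM-BC with $B_{\max}<\infty$. Then for every $n\ge0$, every $a\in\mathbb R$ and every $j\in\{1,\dots,K\}$, almost surely on the event $\{\mathcal H(W|Y_j^n)>0\}$, $$\mathbb E\Big[\big(\ln\mathcal H(W|Y_j^n)-\ln\mathcal H(W|Y_j^{n+1})\big)_a\,\Big|\,Y_j^n\Big]\le\varphi(a),\qquad \varphi(a):=\max_{1\le i\le K}(\ln T_i)_a.$$ Moreover, $\varphi(a)=0$ for all sufficiently large $a$.
   Context: A $K$-user discrete memoryless broadcast channel (DM-BC) consists of a finite input alphabet $\mathcal X$, finite output alphabets $\mathcal Y_1,\dots,\mathcal Y_K$ and a transition law $P_{Y_1,\dots,Y_K|X}$; $P_{Y_j|X}$ denotes its $j$-th marginal. Logarithms are natural. An $(M,N)$-VLFT code ($M$ a positive integer, $N>0$ real) consists of: a message $W$ uniform on $\mathcal W=\{1,\dots,M\}$; encoders $f_n:\mathcal W\times\mathcal Y_1^{n-1}\times\cdots\times\mathcal Y_K^{n-1}\to\mathcal X$, $n\ge1$, with $X_n=f_n(W,Y_1^{n-1},\dots,Y_K^{n-1})$, where given $(W,X^n,Y_1^{n-1},\dots,Y_K^{n-1})$ the tuple $(Y_{1,n},\dots,Y_{K,n})$ is distributed as $P_{Y_1,\dots,Y_K|X}(\cdot|X_n)$; decoders $g^{(j)}_n:\mathcal Y_j^n\to\mathcal W$; for each $j$ a stopping time $\tau_j$ of the filtration $\{\sigma(Y_j^n)\}_{n\ge0}$, with $\tau=\max_j\tau_j$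 satisfying $\mathbb E[\tau]\le N$. For a random vector $Z$, $\mathcal H(W|Z):=-\sum_{w\in\mathcal W}\mathbb P(W=w|Z)\ln\mathbb P(W=w|Z)$ denotes the (random) conditional entropy of $W$ given the realized $Z$. For $x,a\in\mathbb R$, $(x)_a:=x\,\mathbf 1\{x\ge a\}$. $B_j=\max_{x,x'}D(P_{Y_j|X}(\cdot|x)\|P_{Y_j|X}(\cdot|x'))$, $B_{\max}=\max_jB_j$, $T_j=\max_{x,x'\in\mathcal X,\,y\in\mathcal Y_j}\frac{P_{Y_j|X}(y|x)}{P_{Y_j|X}(y|x')}$. *)

(* Defs.v *)
From Stdlib Require Import Reals.
From mathcomp Require Import all_boot.
Set Implicit Arguments.
Unset Strict Implicit.
Unset Printing Implicit Defensive.
Local Open Scope R_scope.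

Definition rpos (x : R) : bool := if Rlt_dec 0 x then true else false.

Definition trunc (a x : R) : R := if Rle_dec a x then x else 0.

Section BC.
Variables (K M : nat) (X : finType) (Y : 'I_K -> finType).

(* one channel output of all K receivers: (y_1,...,y_K) *)
Definition Zout := {dffun forall j : 'I_K, Y j}.

Variable P : X -> Zout -> R.

Definition chan_ok : Prop :=
  (forall x z, (0 <= P x z)) /\
  (forall x, \big[Rplus/0]_(z : Zout) P x z = 1).

Definition marg (j : 'I_K) (x : X) (y : Y j) : R :=
  \big[Rplus/0]_(z : Zout | z j == y) P x z.

(* Kullback-Leibler divergence, None = +infinity *)
Definition KL (A : finType) (p q : A -> R) : option R :=
  if [forall y, rpos (p y) ==> rpos (q y)]
  then Some (\big[Rplus/0]_(y | rpos (p y)) (p y * ln (p y / q y)))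
  else None.

Definition Bmax_finite : Prop :=
  forall (j : 'I_K) (x x' : X), KL (marg (j:=j) x) (marg (j:=j) x') <> None.

Definition Tmax (i : 'I_K) : R :=
  \big[Rmax/0]_(x : X) \big[Rmax/0]_(x' : X) \big[Rmax/0]_(y : Y i)
     (if rpos (marg x' y) then marg x y / marg x' y else 0).

Definition phi (a : R) : R := \big[Rmax/0]_(i < K) trunc a (ln (Tmax i)).

(* encoder: enc t w h = X_{t+1} = f_{t+1}(w, outputs of all receivers at times 1..t),
   h being the list of the t past joint outputs *)
Variable enc : nat -> 'I_M -> seq Zout -> X.

Fixpoint chanprod_aux (w : 'I_M) (hist rest : seq Zout) : R :=
  match rest with
  | [::] => 1
  | z :: r => (P (enc (size hist) w hist) z * chanprod_aux w (rcons hist z) r)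
  end.

(* P(Y^n = zs | W = w) *)
Definition chanprod (w : 'I_M) (zs : seq Zout) : R := chanprod_aux w [::] zs.

(* P(W = w, Y_j^n = ys), n = size ys *)
Definition PWY (j : 'I_K) (w : 'I_M) (ys : seq (Y j)) : R :=
  \big[Rplus/0]_(zs : (size ys).-tuple Zout | map (fun z : Zout => z j) zs == ys)
     (/ INR M * chanprod w zs).

Definition PY (j : 'I_K) (ys : seq (Y j)) : R :=
  \big[Rplus/0]_(w : 'I_M) PWY w ys.

Definition post (j : 'I_K) (ys : seq (Y j)) (w : 'I_M) : R := (PWY w ys / PY ys).

(* H(W | Y_j^n = ys)  (0 ln 0 = 0 since Stdlib ln 0 = 0) *)
Definition condH (j : 'I_K) (ys : seq (Y j)) : R :=
  (- \big[Rplus/0]_(w : 'I_M) (post ys w * ln (post ys w))).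

Definition cond_exp_drop (j : 'I_K) (ys : seq (Y j)) (a : R) : R :=
  \big[Rplus/0]_(y' : Y j)
     (PY (rcons ys y') / PY ys * trunc a (ln (condH ys) - ln (condH (rcons ys y')))).

End BC.

(* Main.v *)
Require Import Defs.
From Stdlib Require Import Reals Lra Classical.
From mathcomp Require Import all_boot.
From mathcomp Require Import Rstruct.
Local Open Scope R_scope.
Set Implicit Arguments.

Lemma ln_le' x y : 0 < x -> x <= y -> ln x <= ln y.
Proof.
move=> hx hxy; case: (Rle_lt_or_eq_dec _ _ hxy) => h.
- by apply: Rlt_le; apply: ln_increasing.
- by rewrite h; apply: Rle_refl.
Qed.

Lemma ln_le_sub1 x : 0 < x -> ln x <= x - 1.
Proof. move=> hx; have := exp_ineq1_le (ln x); rewrite exp_ln //; lra. Qed.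

Lemma Rsum_le (I : finType) (Pr : pred I) (F G : I -> R) :
  (forall i, Pr i -> F i <= G i) ->
  \big[Rplus/0]_(i | Pr i) F i <= \big[Rplus/0]_(i | Pr i) G i.
Proof.
move=> h; apply: (big_ind2 (fun x y => x <= y)); first lra.
- move=> ? ? ? ? ? ?; lra.
- exact: h.
Qed.

Lemma Rsum_ge0 (I : finType) (Pr : pred I) (F : I -> R) :
  (forall i, Pr i -> 0 <= F i) -> 0 <= \big[Rplus/0]_(i | Pr i) F i.
Proof.
move=> h; apply: (big_ind (fun x => 0 <= x)); first lra.
- move=> ? ? ? ?; lra.
- exact: h.
Qed.

Lemma Rsum_opp (I : finType) (Pr : pred I) (F : I -> R) :
  \big[Rplus/0]_(i | Pr i) (- F i) = - \big[Rplus/0]_(i | Pr i) F i.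
Proof.
apply: (big_rec2 (fun x y => x = - y)); first lra.
move=> i x y _ ->; lra.
Qed.

Lemma Rsum_term_le (I : finType) (F : I -> R) i0 :
  (forall i, 0 <= F i) -> F i0 <= \big[Rplus/0]_(i : I) F i.
Proof.
move=> h; rewrite (bigD1 i0) //=.
have := @Rsum_ge0 I (fun i => i != i0) F (fun i _ => h i); lra.
Qed.

Lemma bigmax_ge0 (I : finType) (F : I -> R) : 0 <= \big[Rmax/0]_(i : I) F i.
Proof.
apply: (big_rec (fun x => 0 <= x)); first lra.
move=> i x _ hx; apply: Rle_trans hx (Rmax_r _ _).
Qed.

Lemma bigmax_ub (I : finType) (F : I -> R) i0 : F i0 <= \big[Rmax/0]_(i : I) F i.
Proof.
have : i0 \in index_enum I by rewrite mem_index_enum.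
elim: (index_enum I) => [//|k r IH]; rewrite big_cons in_cons => /orP [/eqP ->|/IH h].
- exact: Rmax_l.
- exact: Rle_trans h (Rmax_r _ _).
Qed.

Lemma bigmax_0 (I : finType) (F : I -> R) : (forall i, F i = 0) -> \big[Rmax/0]_(i : I) F i = 0.
Proof.
move=> h; apply: (big_rec (fun x => x = 0)) => // i x _ ->; rewrite h.
by rewrite Rmax_left; lra.
Qed.

Lemma bigmax_le (I : finType) (F : I -> R) c : 0 <= c -> (forall i, F i <= c) -> \big[Rmax/0]_(i : I) F i <= c.
Proof.
move=> h0 h; apply: (big_rec (fun x => x <= c)) => // i x _ hx.
by apply: Rmax_lub.
Qed.

Lemma ent_term p q T : 0 <= p -> 0 <= q -> q <= 1 -> 0 < T -> p <= T * q ->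
  - (p * ln p) + p <= T * (- (q * ln q)) + q.
Proof.
move=> hp hq hq1 hT hpq.
have hlnq : 0 < q -> ln q <= 0 by move=> hq0; rewrite -ln_1; apply: ln_le'.
case: (Rle_lt_or_eq_dec _ _ hp) => hp0; last first.
  rewrite -hp0. case: (Rle_lt_or_eq_dec _ _ hq) => hq0; last by rewrite -hq0; lra.
  have := hlnq hq0. move=> h. have : 0 <= T * (- (q * ln q)).
    apply: Rmult_le_pos; nra. lra.
have hq0 : 0 < q by nra.
have e : ln p = ln q + ln (p / q).
  by rewrite -ln_mult //; [congr ln; field; lra | apply: Rdiv_lt_0_compat].
have h1 := ln_le_sub1 (Rdiv_lt_0_compat _ _ hq0 hp0).
have e2 : ln (q / p) = - ln (p / q).
  rewrite -ln_Rinv; last by apply: Rdiv_lt_0_compat.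
  by congr ln; field; lra.
rewrite e2 in h1.
have h3 : p * (q / p - 1) = q - p by field; lra.
have h4 : - (p * ln (p / q)) <= q - p by nra.
have h5 : - (p * ln q) <= T * (- (q * ln q)).
  have := hlnq hq0; nra.
rewrite e; nra.
Qed.

Lemma ent_cmp (I : finType) (p q : I -> R) T :
  (forall i, 0 <= p i) -> (forall i, 0 <= q i) ->
  \big[Rplus/0]_(i : I) p i = 1 -> \big[Rplus/0]_(i : I) q i = 1 -> 0 < T ->
  (forall i, p i <= T * q i) ->
  - (\big[Rplus/0]_(i : I) (p i * ln (p i))) <= T * (- (\big[Rplus/0]_(i : I) (q i * ln (q i)))).
Proof.
move=> hp hq sp sq hT hpq.

have hq1 : forall i, q i <= 1 by move=> i; rewrite -sq; apply: (@Rsum_term_le I q i hq).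
have h := @Rsum_le I xpredT (fun i => - (p i * ln (p i)) + p i)
   (fun i => T * (- (q i * ln (q i))) + q i)
   (fun i _ => ent_term (hp i) (hq i) (hq1 i) hT (hpq i)).
rewrite !big_split /= sp sq -big_distrr /= !Rsum_opp in h.
lra.
Qed.

Lemma tuple_split (T : finType) n (F : seq T -> R) :
  \big[Rplus/0]_(t : n.+1.-tuple T) F t =
  \big[Rplus/0]_(t : n.-tuple T) \big[Rplus/0]_(z : T) F (rcons t z).
Proof.
rewrite pair_big /=.
have hbij : bijective (fun p : n.-tuple T * T => [tuple of rcons p.1 p.2]).
  apply: inj_card_bij.
  - move=> [t1 z1] [t2 z2] /(congr1 val) /= /eqP; rewrite eqseq_rcons.
    by case/andP => /eqP e1 /eqP e2; congr pair => //; apply: val_inj.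
  - by rewrite card_prod !card_tuple expnS mulnC.
rewrite (reindex (fun p : n.-tuple T * T => [tuple of rcons p.1 p.2])) /=.
  by apply: eq_bigl.
by apply: onW_bij.
Qed.

Lemma tuple_cast (T : finType) n m (e : n = m) (Pr : seq T -> bool) (F : seq T -> R) :
  \big[Rplus/0]_(t : n.-tuple T | Pr t) F t = \big[Rplus/0]_(t : m.-tuple T | Pr t) F t.
Proof. by subst. Qed.

Lemma tuple_splitP (T : finType) n (Pr : seq T -> bool) (F : seq T -> R) :
  \big[Rplus/0]_(t : n.+1.-tuple T | Pr t) F t =
  \big[Rplus/0]_(t : n.-tuple T) \big[Rplus/0]_(z : T | Pr (rcons t z)) F (rcons t z).
Proof.
rewrite pair_big_dep /=.
have hbij : bijective (fun p : n.-tuple T * T => [tuple of rcons p.1 p.2]).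
  apply: inj_card_bij.
  - move=> [t1 z1] [t2 z2] /(congr1 val) /= /eqP; rewrite eqseq_rcons.
    by case/andP => /eqP e1 /eqP e2; congr pair => //; apply: val_inj.
  - by rewrite card_prod !card_tuple expnS mulnC.
rewrite (reindex (fun p : n.-tuple T * T => [tuple of rcons p.1 p.2])) /=.
  by apply: eq_bigl.
by apply: onW_bij.
Qed.

Lemma chanprod_aux_rcons (K M : nat) (X : finType) (Y : 'I_K -> finType)
  (P : X -> Zout Y -> R) (enc : nat -> 'I_M -> seq (Zout Y) -> X) w r h z :
  chanprod_aux P enc w h (rcons r z) =
  chanprod_aux P enc w h r * P (enc (size h + size r)%nat w (h ++ r)) z.
Proof.
elim: r h => [|z0 r IH] h /=.
  by rewrite addn0 cats0; ring.
rewrite IH size_rcons cat_rcons addSnnS; ring.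
Qed.

Lemma chanprod_aux_ge0 (K M : nat) (X : finType) (Y : 'I_K -> finType)
  (P : X -> Zout Y -> R) (enc : nat -> 'I_M -> seq (Zout Y) -> X) w r h :
  (forall x z, 0 <= P x z) -> 0 <= chanprod_aux P enc w h r.
Proof.
move=> hP; elim: r h => [|z0 r IH] h /=; first lra.
by apply: Rmult_le_pos.
Qed.

Lemma decomp (K M : nat) (X : finType) (Y : 'I_K -> finType)
  (P : X -> Zout Y -> R) (enc : nat -> 'I_M -> seq (Zout Y) -> X)
  (j : 'I_K) (ys : seq (Y j)) (y' : Y j) (w : 'I_M) :
  PWY P enc w (rcons ys y') =
  \big[Rplus/0]_(t : (size ys).-tuple (Zout Y) | map (fun z : Zout Y => z j) t == ys)
     ((/ INR M * chanprod P enc w t) * marg P (enc (size ys) w t) y').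
Proof.
rewrite /PWY (@tuple_cast _ _ _ (size_rcons ys y')
   (fun t : seq (Zout Y) => map (fun z : Zout Y => z j) t == rcons ys y')
   (fun t => / INR M * chanprod P enc w t)).
rewrite (@tuple_splitP _ (size ys) (fun t : seq (Zout Y) => map (fun z : Zout Y => z j) t == rcons ys y') (fun t => / INR M * chanprod P enc w t)) [RHS]big_mkcond.
apply: eq_bigr => t _.
under eq_bigl => z do rewrite map_rcons eqseq_rcons.
case: ifP => ht /=; last by rewrite big_pred0.
rewrite /marg big_distrr /=.
apply: eq_bigr => z _.
by rewrite /chanprod chanprod_aux_rcons /= size_tuple add0n Rmult_assoc.
Qed.

Lemma rposE x : rpos x = true <-> 0 < x.
Proof. by rewrite /rpos; case: Rlt_dec. Qed.

Lemma Rdl (I : finType) (Pr : pred I) (F : I -> R) a :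
  (\big[Rplus/0]_(i | Pr i) F i) * a = \big[Rplus/0]_(i | Pr i) (F i * a).
Proof. by rewrite big_distrl. Qed.
Lemma Rdr (I : finType) (Pr : pred I) (F : I -> R) a :
  a * (\big[Rplus/0]_(i | Pr i) F i) = \big[Rplus/0]_(i | Pr i) (a * F i).
Proof. by rewrite big_distrr. Qed.

Lemma cross (I J : finType) (S : pred J) (c g : I -> J -> R) T w :
  (forall i t, 0 <= c i t) -> (forall i t i' t', g i' t' <= T * g i t) ->
  (\big[Rplus/0]_(t | S t) c w t) * (\big[Rplus/0]_(i : I) \big[Rplus/0]_(t | S t) (c i t * g i t))
  <= T * (\big[Rplus/0]_(t | S t) (c w t * g w t)) * (\big[Rplus/0]_(i : I) \big[Rplus/0]_(t | S t) c i t).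
Proof.
move=> hc hg.
rewrite (Rdl _ S (c w)) (Rdr _ S) (Rdl _ S).
apply: Rsum_le => t _.
rewrite (Rdr _ xpredT) (Rdr _ xpredT).
apply: Rsum_le => i _.
rewrite (Rdr _ S) (Rdr _ S).
apply: Rsum_le => t' _.
have h1 := hc w t; have h2 := hc i t'; have h3 := hg w t i t'.
have h4 : 0 <= c w t * c i t' by apply: Rmult_le_pos.
have := Rmult_le_compat_l _ _ _ h4 h3.
lra.
Qed.
Unset Implicit Arguments.

Theorem lemma8 (K M : nat) (X : finType) (Y : 'I_K -> finType)
  (P : X -> Zout Y -> R) (enc : nat -> 'I_M -> seq (Zout Y) -> X) :
  (0 < K)%nat -> (0 < M)%nat ->
  chan_ok P -> Bmax_finite P ->
  (forall (j : 'I_K) (ys : seq (Y j)) (a : R),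
      (R0 < PY P enc ys) -> (R0 < condH P enc ys) ->
      (forall y' : Y j, (R0 < PY P enc (rcons ys y')) ->
                        (R0 < condH P enc (rcons ys y'))) /\
      (cond_exp_drop P enc ys a <= phi P a)) /\
  (exists a0 : R, forall a : R, (a0 <= a) -> phi P a = R0).
Proof.
move=> hK hM [hP0 hP1] hB.
have hMpos : 0 < INR M by apply: lt_0_INR; apply/ltP.
have marg_ge0 : forall (j : 'I_K) x (y : Y j), 0 <= marg P x y.
  by move=> j x y; apply: Rsum_ge0 => z _; apply: hP0.
have marg_sum : forall (j : 'I_K) x, \big[Rplus/0]_(y : Y j) marg P x y = 1.
  move=> j x; rewrite -(hP1 x).
  rewrite [RHS](@partition_big _ _ _ _ _ (Y j) _ (fun z : Zout Y => z j) xpredT) //=.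
have cp_ge0 : forall w t, 0 <= chanprod P enc w t.
  by move=> w t; apply: chanprod_aux_ge0.
have supp : forall (j : 'I_K) x x' (y : Y j), 0 < marg P x y -> 0 < marg P x' y.
  move=> j x x' y hx; have := hB j x x'; rewrite /KL.
  case: ifP => [/forallP /(_ y) /implyP H _ | _ //].
  by apply/rposE; apply: H; apply/rposE.
have ratio : forall (j : 'I_K) x x' (y : Y j), 0 < marg P x' y ->
    marg P x y <= Tmax P j * marg P x' y.
  move=> j x x' y hx'.
  have h : marg P x y / marg P x' y <= Tmax P j.
    rewrite /Tmax.
    apply: (Rle_trans _ _ _ _ (@bigmax_ub X _ x)).
    apply: (Rle_trans _ _ _ _ (@bigmax_ub X _ x')).
    apply: (Rle_trans _ _ _ _ (@bigmax_ub (Y j) _ y)).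
    have -> : rpos (marg P x' y) = true by apply/rposE.
    exact: Rle_refl.
  have e : marg P x y = marg P x y / marg P x' y * marg P x' y by field; lra.
  rewrite {1}e; apply: Rmult_le_compat_r => //; lra.
split; last first.
  exists (\big[Rmax/0]_(i : 'I_K) ln (Tmax P i) + 1) => a ha.
  rewrite /phi; apply: bigmax_0 => i.
  have h2 : ln (Tmax P i) <= \big[Rmax/0]_(i0 : 'I_K) ln (Tmax P i0)
    := @bigmax_ub 'I_K (fun i => ln (Tmax P i)) i.
  rewrite /trunc; case: Rle_dec => // h1; lra.
move=> j ys a hPY hH.
have PWY_ge0 : forall w (zs : seq (Y j)), 0 <= PWY P enc w zs.
  move=> w zs; apply: Rsum_ge0 => t _; apply: Rmult_le_pos; last exact: cp_ge0.
  by left; apply: Rinv_0_lt_compat.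
have PY_ge0 : forall zs : seq (Y j), 0 <= PY P enc zs.
  by move=> zs; apply: Rsum_ge0 => w _; apply: PWY_ge0.
have post_sum : forall zs : seq (Y j), 0 < PY P enc zs ->
    \big[Rplus/0]_(w : 'I_M) post P enc zs w = 1.
  move=> zs h; rewrite /post /Rdiv -(Rdl _ xpredT).
  rewrite -/(PY P enc zs); field; lra.
have post_ge0 : forall zs : seq (Y j), 0 < PY P enc zs -> forall w, 0 <= post P enc zs w.
  move=> zs h w; rewrite /post /Rdiv; apply: Rmult_le_pos; first exact: PWY_ge0.
  by left; apply: Rinv_0_lt_compat.
have key : forall y', 0 < PY P enc (rcons ys y') ->
    1 <= Tmax P j /\ condH P enc ys <= Tmax P j * condH P enc (rcons ys y').
  move=> y' hPY'.
  have [x0 hx0] : exists x, 0 < marg P x y'.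
    apply: NNPP => hn.
    have hz : forall x, marg P x y' = 0.
      move=> x; case: (Rle_lt_or_eq_dec _ _ (marg_ge0 j x y')) => h //.
      by exfalso; apply: hn; exists x.
    move: hPY'; rewrite /PY big1 => [|w _]; first lra.
    rewrite decomp big1 // => t _; rewrite hz; ring.
  have hall : forall x, 0 < marg P x y' by move=> x; apply: supp hx0.
  have hT1 : 1 <= Tmax P j by have := ratio j x0 x0 y' hx0; nra.
  split => //.
  rewrite /condH.
  apply: (@ent_cmp 'I_M (post P enc ys) (post P enc (rcons ys y'))).
  - exact: post_ge0.
  - exact: post_ge0.
  - exact: post_sum.
  - exact: post_sum.
  - lra.
  move=> w.
  have hc := @cross 'I_M _ (fun t : (size ys).-tuple (Zout Y) => map (fun z : Zout Y => z j) t == ys)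
     (fun i t => / INR M * chanprod P enc i t) (fun i t => marg P (enc (size ys) i t) y') (Tmax P j) w
     (fun i t => Rmult_le_pos _ _ (Rlt_le _ _ (Rinv_0_lt_compat _ hMpos)) (cp_ge0 i t))
     (fun i t i' t' => ratio j _ _ y' (hall _)).
  have hx : PWY P enc w ys * PY P enc (rcons ys y') <= Tmax P j * PWY P enc w (rcons ys y') * PY P enc ys.
    rewrite /PY. under eq_bigr do rewrite decomp. rewrite decomp. exact: hc.
  rewrite /post.
  apply: (Rmult_le_reg_r (PY P enc ys * PY P enc (rcons ys y'))); first nra.
  have e1 : PWY P enc w ys / PY P enc ys * (PY P enc ys * PY P enc (rcons ys y')) =
     PWY P enc w ys * PY P enc (rcons ys y') by field; lra.
  have e2 : Tmax P j * (PWY P enc w (rcons ys y') / PY P enc (rcons ys y')) * (PY P enc ys * PY P enc (rcons ys y')) =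
     Tmax P j * PWY P enc w (rcons ys y') * PY P enc ys by field; lra.
  by rewrite e1 e2.
split.
  move=> y' hy'; have [hT1 hle] := key y' hy'; nra.
rewrite /cond_exp_drop.
have phi0 : 0 <= phi P a by apply: bigmax_ge0.
have hsum : \big[Rplus/0]_(y' : Y j) PY P enc (rcons ys y') = PY P enc ys.
  rewrite /PY. under eq_bigr => y' _ do under eq_bigr => w _ do rewrite decomp.
  rewrite exchange_big. apply: eq_bigr => w _ /=.
  rewrite exchange_big. apply: eq_bigr => t _.
  by rewrite -(Rdr (Y j) xpredT) marg_sum Rmult_1_r.
apply: (Rle_trans _ (\big[Rplus/0]_(y' : Y j) (PY P enc (rcons ys y') / PY P enc ys * phi P a))).
  apply: (@Rsum_le (Y j)) => y' _.
  have hr := PY_ge0 (rcons ys y').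
  case: (Rle_lt_or_eq_dec _ _ hr) => h; last by rewrite -h /Rdiv !Rmult_0_l; lra.
  have hc : 0 <= PY P enc (rcons ys y') / PY P enc ys.
    by rewrite /Rdiv; apply: Rmult_le_pos; [lra | left; apply: Rinv_0_lt_compat].
  apply: Rmult_le_compat_l => //.
  have [hT1 hle] := key y' h.
  have hH' : 0 < condH P enc (rcons ys y') by nra.
  have hD : ln (condH P enc ys) - ln (condH P enc (rcons ys y')) <= ln (Tmax P j).
    have := ln_le' hH hle; rewrite ln_mult; lra.
  have := @bigmax_ub 'I_K (fun i => trunc a (ln (Tmax P i))) j.
  rewrite -/(phi P a) /trunc; do 2 case: Rle_dec => ? /=; lra.
rewrite -(Rdl (Y j) xpredT).
have -> : \big[Rplus/0]_(y' : Y j) (PY P enc (rcons ys y') / PY P enc ys) = 1.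
  rewrite /Rdiv -(Rdl (Y j) xpredT) hsum; field; lra.
lra.
Qed.
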